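(* For every $\lambda\in P^+$ (notation as in the context) one has $$(\widetilde\lambda+2\widetilde\rho,\widetilde\lambda)=(\lambda+2\rho,\lambda)=(\overline\lambda+2\overline\rho,\overline\lambda).$$
   Context: Fix $m\in\mathbb Z_{\ge0}$ and a type $\mathfrak x\in\{\mathfrak a,\mathfrak b,\mathfrak b^\bullet,\mathfrak c,\mathfrak d\}$. Consider symbols $\Lambda_0$ and $\epsilon_j$ for $j\in\{-m,\dots,-1\}\cup\frac12\mathbb N$, and the symmetric bilinear form on their $\mathbb C$-span given by $(\Lambda_0,\Lambda_0)=0$, $(\epsilon_i,\epsilon_j)=(-1)^{2j}\delta_{ij}$, $(\Lambda_0,\epsilon_j)=-\delta_j$, where $\delta_j=1$ for $j>0$ and $\delta_j=0$ for $j<0$. Dominant weights: given a partition $\nu=(\nu_1,\nu_2,\dots)$, $d\in\mathbb C$ and $\lambda_{-m},\dots,\lambda_{-1}\in\mathbb C$ (in $\mathbb Z$ for type $\mathfrak b^\bullet$), put $\lambda=\sum_{i=-m}^{-1}\lambda_i\epsilon_i+\sum_{j\in\mathbb N}\nu_j\epsilon_j+d\Lambda_0$, $\overline\lambda=\sum_{i=-m}^{-1}\lambda_i\epsilon_i+\sum_{s\in\frac12+\mathbb Z_{\ge0}}\nu'_{s+1/2}\epsilon_s+d\Lambda_0$, $\widetilde\lambda=\sum_{i=-m}^{-1}\lambda_i\epsilon_i+\sum_{r\in\frac12\mathbb N}\theta(\nu)_r\epsilon_r+d\Lambda_0$, where $\nu'$ is the conjugate partition and $\theta(\nu)_{i-1/2}=\max\{\nu'_i-i+1,0\}$,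 $\theta(\nu)_i=\max\{\nu_i-i,0\}$ for $i\in\mathbb N$. $P^+$ is the set of all such $\lambda$. Let $\mathbf r=-1$ in type $\mathfrak a$, $-m-\frac12$ in types $\mathfrak b,\mathfrak b^\bullet$, $-m-1$ in type $\mathfrak c$, $-m$ in type $\mathfrak d$. For a weight $\mu=c\Lambda_0+\sum_j\mu_j\epsilon_j$ (finitely many nonzero $\mu_j$) define $(\mu+2\rho,\mu):=(\mu,\mu)+2\sum_j\mu_j\rho_j$, $(\mu+2\overline\rho,\mu):=(\mu,\mu)+2\sum_j\mu_j\overline\rho_j$, $(\mu+2\widetilde\rho,\mu):=(\mu,\mu)+2\sum_j\mu_j\widetilde\rho_j$, where for $j<0$: $\rho_j=\overline\rho_j=\widetilde\rho_j=\mathbf r-j$; for $j\in\mathbb N$: $\rho_j=\mathbf r+1-j$; for $j\in\frac12+\mathbb Z_{\ge0}$: $\overline\rho_j=\mathbf r+j+\frac12$; for $j\in\frac12\mathbb N$: $\widetilde\rho_j=\mathbf r+1$. *)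

(* Defs.v *)
From HB Require Import structures.
From mathcomp Require Import all_boot all_order all_algebra.
From mathcomp Require Import complex.
Set Implicit Arguments. Unset Strict Implicit. Unset Printing Implicit Defensive.
Import Order.TTheory GRing.Theory Num.Theory.
Local Open Scope ring_scope.

Inductive xtype := Ta | Tb | Tbb | Tc | Td.

Section Weights.
Variable R : rcfType.
Local Notation C := (R[i]).
Variable m : nat.

(* Indices: the negative index j = -(i+1) for i : 'I_m (so j ranges over
   -m..-1), and the positive half-integer index j = k/2 for k : nat, k >= 1.
   A weight  c Lambda_0 + sum_j mu_j eps_j  is given by c, the negative part
   wneg i = mu_{-(i+1)}, and the positive part wpos k = mu_{k/2}
   (wpos 0 is irrelevant). *)
Record weight := Weight { wd : C; wneg : 'I_m -> C; wpos : nat -> C }.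

Definition half (k : nat) : C := k%:R / 2.

Definition rr (x : xtype) : C :=
  match x with
  | Ta => -1
  | Tb | Tbb => - m%:R - 1 / 2
  | Tc => - m%:R - 1
  | Td => - m%:R
  end.

(* the sign (-1)^{2j} for j = k/2 *)
Definition sgn (k : nat) : C := (-1) ^+ k.

(* (mu, mu), computed over positive indices 1 <= k < K (K bounding the
   support of mu). Uses (Lambda0,Lambda0)=0, (eps_i,eps_j)=(-1)^{2j}delta_ij,
   (Lambda0, eps_j) = -delta_j. *)
Definition wform (K : nat) (mu : weight) : C :=
  \sum_(i < m) (wneg mu i) ^+ 2
  + \sum_(1 <= k < K) sgn k * (wpos mu k) ^+ 2
  - 2 * wd mu * \sum_(1 <= k < K) wpos mu k.

(* rho_j = r - j for j < 0, j = -(i+1) *)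
Definition rho_neg (x : xtype) (i : 'I_m) : C := rr x + (i.+1)%:R.
(* rho_j = r + 1 - j for j in N (k = 2j even); rho has no half-integer
   components. *)
Definition rho_pos (x : xtype) (k : nat) : C :=
  if odd k then 0 else rr x + 1 - half k.
(* rhobar_j = r + j + 1/2 for j in 1/2 + Z_{>=0} (k = 2j odd). *)
Definition rhobar_pos (x : xtype) (k : nat) : C :=
  if odd k then rr x + half k + 1 / 2 else 0.
Definition rhotil_pos (x : xtype) (k : nat) : C := rr x + 1.

(* (mu + 2 rho', mu) := (mu,mu) + 2 sum_j mu_j rho'_j *)
Definition wform_rho (x : xtype) (rp : xtype -> nat -> C) (K : nat)
    (mu : weight) : C :=
  wform K mu + 2 * (\sum_(i < m) wneg mu i * rho_neg x i
                    + \sum_(1 <= k < K) wpos mu k * rp x k).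

(* Partitions nu = (nu_1, nu_2, ...) are represented by a nonincreasing
   seq nat (followed by zeros). *)
Definition part_nth (nu : seq nat) (j : nat) : nat := nth 0 nu j.-1.
Definition conj_nth (nu : seq nat) (i : nat) : nat :=
  count (fun a => i <= a)%N nu.
(* theta(nu)_{i-1/2} = max(nu'_i - i + 1, 0), theta(nu)_i = max(nu_i - i, 0) *)
Definition theta_half (nu : seq nat) (i : nat) : nat := (conj_nth nu i + 1 - i)%N.
Definition theta_int (nu : seq nat) (i : nat) : nat := (part_nth nu i - i)%N.

Definition lam_pos (nu : seq nat) (k : nat) : C :=
  if odd k then 0 else (part_nth nu k./2)%:R.
Definition lambar_pos (nu : seq nat) (k : nat) : C :=
  if odd k then (conj_nth nu k.+1./2)%:R else 0.   (* s = k/2, s+1/2 = (k+1)/2 *)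
Definition lamtil_pos (nu : seq nat) (k : nat) : C :=
  if odd k then (theta_half nu k.+1./2)%:R else (theta_int nu k./2)%:R.

Definition lam_wt nu d (l : 'I_m -> C) := Weight d l (lam_pos nu).
Definition lambar_wt nu d (l : 'I_m -> C) := Weight d l (lambar_pos nu).
Definition lamtil_wt nu d (l : 'I_m -> C) := Weight d l (lamtil_pos nu).

End Weights.

(* Main.v *)
Require Import Defs.
From HB Require Import structures.
From mathcomp Require Import all_boot all_order all_algebra.
From mathcomp Require Import complex.
From mathcomp Require Import zify ring.
Import Order.TTheory GRing.Theory Num.Theory.

Lemma window L s v (f : nat -> nat) :
  \sum_(t < L) ((s <= t) && (t < v)) * f (t - s) = \sum_(0 <= u < minn L v - s) f u.
Proof.
elim: L => [|L IH]; first by rewrite !big_ord0 min0n sub0n big_geq.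
rewrite big_ord_recr /= IH.
case: (ltnP L v) => Hv.
- rewrite (minn_idPl Hv) andbT.
  case: (leqP s L) => Hs /=.
  + have -> : L.+1 - s = (L - s).+1 by lia.
    by rewrite big_nat_recr //= mul1n.
  + have -> : L.+1 - s = L - s by lia.
    by rewrite mul0n addn0.
- by rewrite (minn_idPr (leqW Hv)) andbF mul0n addn0.
Qed.

Lemma window' L s v (f : nat -> nat) : v <= L ->
  \sum_(t < L) ((s <= t) && (t < v)) * f (t - s) = \sum_(0 <= u < v - s) f u.
Proof. by move=> H; rewrite window (minn_idPr H). Qed.

Lemma sum_one w : \sum_(0 <= u < w) 1 = w.
Proof. by rewrite big_mkord sum1_card card_ord. Qed.

Lemma sum_odd w : \sum_(0 <= u < w) (2 * u + 1) = w * w.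
Proof.
elim: w => [|w IH]; first by rewrite big_geq.
rewrite big_nat_recr //= IH. lia.
Qed.

Lemma transp s c i : sorted geq s ->
  (c < nth 0 s i) = (i < count (fun a => c < a) s).
Proof.
elim: s i => [|x s IH] i /=; first by rewrite nth_nil.
move=> Hs.
have Hs' := path_sorted Hs.
have Hall : all (fun y => y <= x) s.
  apply: (order_path_min _ Hs) => a b d /= H1 H2; exact: leq_trans H2 H1.
case: (ltnP c x) => Hcx.
- case: i => [|i] /=; first by rewrite Hcx.
  by rewrite IH // add1n ltnS.
- have Hc0 : count (fun a => c < a) s = 0.
    apply/eqP; rewrite -leqn0 leqNgt -has_count; apply/hasPn => y Hy.
    move/allP: Hall => /(_ y Hy) /= Hyx; rewrite -leqNgt; exact: leq_trans Hyx Hcx.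
  rewrite Hc0 /=.
  case: i => [|i] /=; first by rewrite ltnNge Hcx.
  rewrite add0n ltn0; apply/negbTE; rewrite -leqNgt.
  case: (ltnP i (size s)) => Hi.
  + move/allP: Hall => /(_ _ (mem_nth 0 Hi)) /= H; exact: leq_trans H Hcx.
  + rewrite nth_default //.
Qed.

Lemma sumn_ge s a : a \in s -> a <= sumn s.
Proof.
elim: s => [|x s IH] //=; rewrite in_cons => /orP [/eqP -> | H]; first lia.
have := IH H; lia.
Qed.

Section Part.
Variable nu : seq nat.
Hypothesis Hnu : sorted geq nu.
Variable L : nat.
Hypothesis Hsz : size nu <= L.
Hypothesis Hmax : sumn nu <= L.

Let v i := nth 0 nu i.
Let w c := count (fun a => c < a) nu.
Let B i c : nat := c < v i.

Lemma v_le i : v i <= L.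
Proof.
rewrite /v; case: (ltnP i (size nu)) => Hi.
- have := @sumn_ge _ _ (mem_nth 0 Hi); rewrite /= => H; exact: leq_trans H Hmax.
- by rewrite nth_default.
Qed.

Lemma w_le c : w c <= L.
Proof. have := count_size (fun a => c < a) nu; rewrite /w; lia. Qed.

Lemma Bw i c : B i c = (i < w c).
Proof. by rewrite /B /v transp. Qed.

Lemma v_gen s (f : nat -> nat) i :
  \sum_(c < L) B i c * ((s <= c) * f (c - s)) = \sum_(0 <= u < v i - s) f u.
Proof.
rewrite -(@window' L s (v i) f (v_le i)); apply: eq_bigr => c _.
rewrite /B; case: (s <= c); case: (c < v i) => //=; lia.
Qed.

Lemma w_gen s (f : nat -> nat) c :
  \sum_(i < L) B i c * ((s <= i) * f (i - s)) = \sum_(0 <= u < w c - s) f u.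
Proof.
rewrite -(@window' L s (w c) f (w_le c)); apply: eq_bigr => i _.
rewrite Bw; case: (s <= i); case: (i < w c) => //=; lia.
Qed.

Lemma v1 i : v i = \sum_(c < L) B i c * ((0 <= c) * 1).
Proof. by rewrite (v_gen 0 (fun _ => 1)) sum_one subn0. Qed.
Lemma v2 i : v i * v i = \sum_(c < L) B i c * ((0 <= c) * (2 * (c - 0) + 1)).
Proof. by rewrite (v_gen 0 (fun u => 2 * u + 1)) sum_odd subn0. Qed.
Lemma v3 i : (v i - i.+1) * (v i - i.+1) =
   \sum_(c < L) B i c * ((i.+1 <= c) * (2 * (c - i.+1) + 1)).
Proof. by rewrite (v_gen i.+1 (fun u => 2 * u + 1)) sum_odd. Qed.
Lemma v4 i : v i - i.+1 = \sum_(c < L) B i c * ((i.+1 <= c) * 1).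
Proof. by rewrite (v_gen i.+1 (fun _ => 1)) sum_one. Qed.
Lemma w1 c : w c = \sum_(i < L) B i c * ((0 <= i) * 1).
Proof. by rewrite (w_gen 0 (fun _ => 1)) sum_one subn0. Qed.
Lemma w2 c : w c * w c = \sum_(i < L) B i c * ((0 <= i) * (2 * (i - 0) + 1)).
Proof. by rewrite (w_gen 0 (fun u => 2 * u + 1)) sum_odd subn0. Qed.
Lemma w3 c : (w c - c) * (w c - c) =
   \sum_(i < L) B i c * ((c <= i) * (2 * (i - c) + 1)).
Proof. by rewrite (w_gen c (fun u => 2 * u + 1)) sum_odd. Qed.
Lemma w4 c : w c - c = \sum_(i < L) B i c * ((c <= i) * 1).
Proof. by rewrite (w_gen c (fun _ => 1)) sum_one. Qed.


Lemma I_A : \sum_(i < L) v i * v i + \sum_(i < L) w i * w i + 2 * \sum_(i < L) v i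
  = 2 * \sum_(i < L) i.+1 * w i + 2 * \sum_(i < L) i.+1 * v i.
Proof.
under eq_bigr do rewrite v2.
under [in X in _ + X + _ = _]eq_bigr do rewrite w2.
under [in X in _ + _ + 2 * X = _]eq_bigr do rewrite v1.
under [in X in _ = 2 * X + _]eq_bigr do rewrite w1 big_distrr.
under [in X in _ = _ + 2 * X]eq_bigr do rewrite v1 big_distrr.
rewrite [X in _ + X + _ = _]exchange_big [X in _ = 2 * X + _]exchange_big /=.
rewrite !big_distrr -!big_split; apply: eq_bigr => i _.
rewrite !big_distrr -!big_split; apply: eq_bigr => c _ /=.
case: (B i c); lia.
Qed.


Lemma I_P1 : \sum_(i < L) v i = \sum_(i < L) w i.
Proof.
under eq_bigr do rewrite v1.
under [in X in _ = X]eq_bigr do rewrite w1.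
rewrite [X in _ = X]exchange_big /=; apply: eq_bigr => i _; apply: eq_bigr => c _.
by [].
Qed.

Lemma I_P2 : \sum_(i < L) v i = \sum_(i < L) ((v i - i.+1) + (w i - i)).
Proof.
rewrite big_split /=.
under eq_bigr do rewrite v1.
under [in X in _ = X + _]eq_bigr do rewrite v4.
under [in X in _ = _ + X]eq_bigr do rewrite w4.
rewrite [X in _ = _ + X]exchange_big /= -big_split; apply: eq_bigr => i _.
rewrite -big_split; apply: eq_bigr => c _ /=.
case: (B i c) => /=; lia.
Qed.

Lemma I_B : \sum_(i < L) (v i - i.+1) * (v i - i.+1) + 2 * \sum_(i < L) i.+1 * v i
  = \sum_(i < L) (w i - i) * (w i - i) + \sum_(i < L) v i * v i.
Proof.
under eq_bigr do rewrite v3.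
under [in X in _ + 2 * X = _]eq_bigr do rewrite v1 big_distrr.
under [in X in _ = X + _]eq_bigr do rewrite w3.
under [in X in _ = _ + X]eq_bigr do rewrite v2.
rewrite [X in _ = X + _]exchange_big /=.
rewrite !big_distrr -!big_split; apply: eq_bigr => i _.
rewrite !big_distrr -!big_split; apply: eq_bigr => c _ /=.
rewrite /B; case: (c < v i) => /=; case: (ltnP i c) => H /=; lia.
Qed.

End Part.

Local Open Scope ring_scope.


Lemma pair_sum (V : nmodType) K L (f : nat -> V) :
  (forall k, (K <= k)%N -> f k = 0) -> (K <= L.*2.+1)%N ->
  \sum_(1 <= k < K) f k = \sum_(i < L) (f i.*2.+1 + f i.*2.+2).
Proof.
move=> Hf HKL.
have -> : \sum_(1 <= k < K) f k = \sum_(1 <= k < L.*2.+1) f k.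
  case: (leqP K 1) => HK1.
  - rewrite big_geq // big_nat big1 // => k /andP [H1 H2]; apply: Hf.
    exact: leq_trans HK1 H1.
  - rewrite [RHS](big_cat_nat _ (n := K)) //=; last exact: ltnW.
    rewrite [X in _ = _ + X](_ : _ = 0) ?addr0 //; rewrite big_nat big1 // => k /andP [H1 _]; exact: Hf.
clear HKL Hf.
elim: L => [|L IH]; first by rewrite big_ord0 big_geq.
rewrite big_ord_recr /= -IH doubleS big_nat_recr //= big_nat_recr //=.
by rewrite addrA.
Qed.

Section C.
Variable R : rcfType.
Local Notation C := (R[i]).
Variable nu : seq nat.

Lemma half_even (i : nat) : Defs.half R (i.*2.+2) = (i.+1)%:R.
Proof.
unfold Defs.half; rewrite -doubleS -muln2 natrM mulfK //.
by rewrite pnatr_eq0.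
Qed.

Lemma half_odd (i : nat) : Defs.half R (i.*2.+1) + 1 / 2 = (i.+1)%:R.
Proof.
unfold Defs.half; rewrite -mulrDl natr1 -doubleS -muln2 natrM mulfK //.
by rewrite pnatr_eq0.
Qed.

Lemma sgn_even i : sgn R (i.*2.+2) = 1.
Proof. by rewrite /sgn -signr_odd /= negbK odd_double expr0. Qed.
Lemma sgn_odd i : sgn R (i.*2.+1) = -1.
Proof. by rewrite /sgn -signr_odd /= odd_double expr1. Qed.



Lemma lam_odd i : lam_pos R nu i.*2.+1 = 0 :> C.
Proof. by rewrite /lam_pos /= odd_double. Qed.
Lemma lam_even i : lam_pos R nu i.*2.+2 = (nth 0 nu i)%:R :> C.
Proof. by rewrite /lam_pos -doubleS odd_double doubleK. Qed.
Lemma bar_odd i : lambar_pos R nu i.*2.+1 = (count (fun a => (i < a)%N) nu)%:R :> C.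
Proof. by rewrite /lambar_pos -doubleS doubleK /= odd_double. Qed.
Lemma bar_even i : lambar_pos R nu i.*2.+2 = 0 :> C.
Proof. by rewrite /lambar_pos -doubleS odd_double. Qed.
Lemma til_odd i : lamtil_pos R nu i.*2.+1 = (count (fun a => (i < a)%N) nu - i)%N%:R :> C.
Proof.
rewrite /lamtil_pos -doubleS doubleK /= odd_double /= /theta_half /conj_nth.
by rewrite addn1 subSS.
Qed.
Lemma til_even i : lamtil_pos R nu i.*2.+2 = (nth 0 nu i - i.+1)%N%:R :> C.
Proof. by rewrite /lamtil_pos -doubleS odd_double doubleK. Qed.
Lemma rho_odd m x i : rho_pos R m x i.*2.+1 = 0.
Proof. by rewrite /rho_pos /= odd_double. Qed.
Lemma rho_even m x i : rho_pos R m x i.*2.+2 = rr R m x + 1 - (i.+1)%:R.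
Proof. by rewrite /rho_pos half_even -doubleS odd_double. Qed.
Lemma rhobar_odd m x i : rhobar_pos R m x i.*2.+1 = rr R m x + (i.+1)%:R.
Proof. by rewrite /rhobar_pos -addrA half_odd /= odd_double. Qed.
Lemma rhobar_even m x i : rhobar_pos R m x i.*2.+2 = 0.
Proof. by rewrite /rhobar_pos -doubleS odd_double. Qed.

End C.

Lemma fin1 (R : rcfType) (N1 N2 rr d q1 q2 q5 q6 p : R[i]) :
  q5 + (q2 + (q2 + 0)) = q6 + q1 ->
  N1 + (q5 - q6) - 2 * d * p + 2 * (N2 + (rr + 1) * p)
  = N1 + q1 - 2 * d * p + 2 * (N2 + ((rr + 1) * p - q2)).
Proof. move=> H; have -> : q1 = q5 + (q2 + (q2 + 0)) - q6 by rewrite H; ring. ring. Qed.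

Lemma fin2 (R : rcfType) (N1 N2 rr d q1 q2 q3 q4 p : R[i]) :
  q1 + q3 + (p + (p + 0)) = q4 + (q4 + 0) + (q2 + (q2 + 0)) ->
  N1 + q1 - 2 * d * p + 2 * (N2 + ((rr + 1) * p - q2))
  = N1 - q3 - 2 * d * p + 2 * (N2 + (rr * p + q4)).
Proof.
move=> H; have -> : q1 = q4 + (q4 + 0) + (q2 + (q2 + 0)) - q3 - (p + (p + 0)).
  by rewrite -H; ring.
ring.
Qed.

Theorem proposition3p3 (R : rcfType) (m : nat) (x : xtype)
    (nu : seq nat) (Hnu : sorted geq nu)
    (d : R[i]) (l : 'I_m -> R[i])
    (Hbb : x = Tbb -> forall j : 'I_m, exists z : int, l j = z%:~R)
    (K : nat)
    (HK : forall k, (K <= k)%N ->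
       [/\ lam_pos R nu k = 0, lambar_pos R nu k = 0 & lamtil_pos R nu k = 0]) :
  wform_rho x (@rhotil_pos R m) K (lamtil_wt nu d l)
    = wform_rho x (@rho_pos R m) K (lam_wt nu d l)
  /\ wform_rho x (@rho_pos R m) K (lam_wt nu d l)
    = wform_rho x (@rhobar_pos R m) K (lambar_wt nu d l).
Proof.
pose L := (K + size nu + sumn nu)%N.
have HKL : (K <= L.*2.+1)%N by rewrite -addnn /L; lia.
have Hsz : (size nu <= L)%N by rewrite /L; lia.
have Hmax : (sumn nu <= L)%N by rewrite /L; lia.
have hA := congr1 (fun n => n%:R : R[i]) (@I_A nu Hnu L Hsz Hmax).
have hB := congr1 (fun n => n%:R : R[i]) (@I_B nu Hnu L Hsz Hmax).
have hP1 := congr1 (fun n => n%:R : R[i]) (@I_P1 nu Hnu L Hsz Hmax).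
have hP2 := congr1 (fun n => n%:R : R[i]) (@I_P2 nu Hnu L Hsz Hmax).
rewrite /= !natrD in hA hB.
rewrite /= in hP1 hP2.
have SA1 : \sum_(1 <= k < K) sgn R k * lam_pos R nu k ^+ 2
   = (\sum_(i < L) nth 0 nu i * nth 0 nu i)%N%:R.
  rewrite (@pair_sum _ K L) //; last first.
    by move=> k Hk; case: (HK k Hk) => -> _ _; rewrite expr2 !mulr0.
  rewrite natr_sum; apply: eq_bigr => i _.
  by rewrite lam_odd lam_even sgn_even expr2 !mulr0 add0r mul1r natrM.

have SB1 : \sum_(1 <= k < K) lam_pos R nu k = (\sum_(i < L) nth 0 nu i)%N%:R.
  rewrite (@pair_sum _ K L) //; last by move=> k Hk; case: (HK k Hk).
  rewrite natr_sum; apply: eq_bigr => i _.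
  by rewrite lam_odd lam_even add0r.
have SD1 : \sum_(1 <= k < K) lam_pos R nu k * rho_pos R m x k
   = (rr R m x + 1) * (\sum_(i < L) nth 0 nu i)%N%:R
     - (\sum_(i < L) i.+1 * nth 0 nu i)%N%:R.
  rewrite (@pair_sum _ K L) //; last first.
    by move=> k Hk; case: (HK k Hk) => -> _ _; rewrite mul0r.
  rewrite !natr_sum mulr_sumr -sumrB; apply: eq_bigr => i _.
  rewrite lam_odd lam_even rho_even natrM; ring.
have SA2 : \sum_(1 <= k < K) sgn R k * lambar_pos R nu k ^+ 2
   = - (\sum_(i < L) count (fun a => (i < a)%N) nu * count (fun a => (i < a)%N) nu)%N%:R.
  rewrite (@pair_sum _ K L) //; last first.
    by move=> k Hk; case: (HK k Hk) => _ -> _; rewrite expr2 !mulr0.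
  rewrite natr_sum -sumrN; apply: eq_bigr => i _.
  rewrite bar_odd bar_even sgn_odd natrM; ring.
have SB2 : \sum_(1 <= k < K) lambar_pos R nu k
   = (\sum_(i < L) count (fun a => (i < a)%N) nu)%N%:R.
  rewrite (@pair_sum _ K L) //; last by move=> k Hk; case: (HK k Hk).
  rewrite natr_sum; apply: eq_bigr => i _.
  by rewrite bar_odd bar_even addr0.
have SD2 : \sum_(1 <= k < K) lambar_pos R nu k * rhobar_pos R m x k
   = rr R m x * (\sum_(i < L) count (fun a => (i < a)%N) nu)%N%:R
     + (\sum_(i < L) i.+1 * count (fun a => (i < a)%N) nu)%N%:R.
  rewrite (@pair_sum _ K L) //; last first.
    by move=> k Hk; case: (HK k Hk) => _ -> _; rewrite mul0r.
  rewrite !natr_sum mulr_sumr -big_split; apply: eq_bigr => i _.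
  rewrite /= bar_odd bar_even rhobar_odd natrM; ring.
have SA3 : \sum_(1 <= k < K) sgn R k * lamtil_pos R nu k ^+ 2
   = (\sum_(i < L) (nth 0 nu i - i.+1) * (nth 0 nu i - i.+1))%N%:R
   - (\sum_(i < L) (count (fun a => (i < a)%N) nu - i) * (count (fun a => (i < a)%N) nu - i))%N%:R.
  rewrite (@pair_sum _ K L) //; last first.
    by move=> k Hk; case: (HK k Hk) => _ _ ->; rewrite expr2 !mulr0.
  rewrite !natr_sum -sumrB; apply: eq_bigr => i _.
  rewrite til_odd til_even sgn_odd sgn_even !natrM; ring.
have SB3 : \sum_(1 <= k < K) lamtil_pos R nu k
   = (\sum_(i < L) ((nth 0 nu i - i.+1) + (count (fun a => (i < a)%N) nu - i)))%N%:R.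
  rewrite (@pair_sum _ K L) //; last by move=> k Hk; case: (HK k Hk).
  rewrite natr_sum; apply: eq_bigr => i _.
  by rewrite til_odd til_even natrD addrC.
have SD3 : \sum_(1 <= k < K) lamtil_pos R nu k * rhotil_pos R m x k
   = (rr R m x + 1) * \sum_(1 <= k < K) lamtil_pos R nu k.
  by rewrite mulr_sumr; apply: eq_bigr => k _; rewrite /rhotil_pos mulrC.
rewrite /wform_rho /wform /= SA1 SB1 SD1 SA2 SB2 SD2 SA3 SD3 SB3.
rewrite -hP2 -hP1.
split; [exact: fin1 hB | exact: fin2 hA].
Qed.
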